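(* Let $\mathcal{C}$ be a symmetric monoidal $\infty$-category, let $I \in \mathcal{C}$ be an invertible object, and let $I \xrightarrow{e} X \xrightarrow{f} I$ be a retraction (i.e. $f \circ e \simeq \mathrm{id}_I$). Suppose that $X$ is symmetric, meaning that for some $n \ge 2$ the cyclic permutation of the factors of $X^{\otimes n}$ is homotopic to the identity. Then $e$ and $f$ are mutually inverse equivalences. *)

(* Defs.v *)
From Stdlib Require Import Arith.
Set Implicit Arguments.

Record SymMonCat := {
  ob :> Type;
  hom : ob -> ob -> Type;
  idm : forall a, hom a a;
  comp : forall a b c, hom b c -> hom a b -> hom a c;
  comp_id_l : forall a b (g : hom a b), comp (idm b) g = g;
  comp_id_r : forall a b (g : hom a b), comp g (idm a) = g;
  comp_assoc : forall a b c d (h : hom c d) (g : hom b c) (k : hom a b),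
      comp h (comp g k) = comp (comp h g) k;
  tens : ob -> ob -> ob;
  tensm : forall a b c d, hom a b -> hom c d -> hom (tens a c) (tens b d);
  tensm_id : forall a c, tensm (idm a) (idm c) = idm (tens a c);
  tensm_comp : forall a b x c d y (g : hom b x) (g' : hom a b)
                      (h : hom d y) (h' : hom c d),
      tensm (comp g g') (comp h h') = comp (tensm g h) (tensm g' h');
  unit : ob;
  assoc : forall a b c, hom (tens (tens a b) c) (tens a (tens b c));
  assoc_inv : forall a b c, hom (tens a (tens b c)) (tens (tens a b) c);
  assoc_iso1 : forall a b c, comp (assoc_inv a b c) (assoc a b c) = idm _;
  assoc_iso2 : forall a b c, comp (assoc a b c) (assoc_inv a b c) = idm _;
  lunit : forall a, hom (tens unit a) a;
  lunit_inv : forall a, hom a (tens unit a);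
  lunit_iso1 : forall a, comp (lunit_inv a) (lunit a) = idm _;
  lunit_iso2 : forall a, comp (lunit a) (lunit_inv a) = idm _;
  runit : forall a, hom (tens a unit) a;
  runit_inv : forall a, hom a (tens a unit);
  runit_iso1 : forall a, comp (runit_inv a) (runit a) = idm _;
  runit_iso2 : forall a, comp (runit a) (runit_inv a) = idm _;
  braid : forall a b, hom (tens a b) (tens b a);
  assoc_nat : forall a a' b b' c c' (f : hom a a') (g : hom b b') (h : hom c c'),
      comp (assoc a' b' c') (tensm (tensm f g) h)
      = comp (tensm f (tensm g h)) (assoc a b c);
  lunit_nat : forall a a' (f : hom a a'),
      comp (lunit a') (tensm (idm unit) f) = comp f (lunit a);
  runit_nat : forall a a' (f : hom a a'),
      comp (runit a') (tensm f (idm unit)) = comp f (runit a);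
  braid_nat : forall a a' b b' (f : hom a a') (g : hom b b'),
      comp (braid a' b') (tensm f g) = comp (tensm g f) (braid a b);
  pentagon : forall a b c d,
      comp (assoc a b (tens c d)) (assoc (tens a b) c d)
      = comp (tensm (idm a) (assoc b c d))
             (comp (assoc a (tens b c) d) (tensm (assoc a b c) (idm d)));
  triangle : forall a b,
      comp (tensm (idm a) (lunit b)) (assoc a unit b)
      = tensm (runit a) (idm b);
  hexagon : forall a b c,
      comp (assoc b c a) (comp (braid a (tens b c)) (assoc a b c))
      = comp (tensm (idm b) (braid a c))
             (comp (assoc b a c) (tensm (braid a b) (idm c)));
  braid_sym : forall a b, comp (braid b a) (braid a b) = idm (tens a b)
}.

Arguments idm {C} a : rename.
Arguments comp {C a b c} _ _ : rename.
Arguments tens {C} _ _ : rename.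
Arguments tensm {C a b c d} _ _ : rename.
Arguments unit {C} : rename.
Arguments braid {C} a b : rename.
Arguments assoc {C} a b c : rename.
Arguments lunit {C} a : rename.
Arguments runit_inv {C} a : rename.

Section Defs.
Variable C : SymMonCat.

Definition is_iso (a b : C) (g : hom C a b) : Prop :=
  exists h : hom C b a, comp h g = idm a /\ comp g h = idm b.

Definition invertible_object (I : C) : Prop :=
  exists (J : C) (u : hom C (tens I J) unit), is_iso (tens I J) unit u.

Fixpoint tpow (X : C) (n : nat) : C :=
  match n with
  | 0 => unit
  | S m => tens X (tpow X m)
  end.

Fixpoint shift (X : C) (n : nat) : hom C (tens (tpow X n) X) (tpow X (S n)) :=
  match n return hom C (tens (tpow X n) X) (tpow X (S n)) with
  | 0 => comp (runit_inv X) (lunit X)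
  | S m => comp (tensm (idm X) (shift X m)) (assoc X (tpow X m) X)
  end.

(* The cyclic permutation of the factors of X^(n):
   x1 (x) x2 (x) ... (x) xn  |-->  x2 (x) ... (x) xn (x) x1.
   For n = 0 it is the identity of the unit. *)
Definition cyclic_perm (X : C) (n : nat) : hom C (tpow X n) (tpow X n) :=
  match n return hom C (tpow X n) (tpow X n) with
  | 0 => idm unit
  | S m => comp (shift X m) (braid X (tpow X m))
  end.

(* X is symmetric: for some n >= 2 the cyclic permutation of X^(n) is
   (homotopic, i.e. equal in the homotopy category, to) the identity. *)
Definition symmetric_object (X : C) : Prop :=
  exists n, 2 <= n /\ cyclic_perm X n = idm (tpow X n).

End Defs.
Arguments is_iso {C a b} g.
Arguments invertible_object {C} I.
Arguments symmetric_object {C} X.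

(* Main.v *)
Require Import Defs.
From Stdlib Require Import Lia.

Fixpoint lastm {C : SymMonCat} {X : C} (a : hom C X X) (k : nat)
  : hom C (tpow C X (S k)) (tpow C X (S k)) :=
  match k return hom C (tpow C X (S k)) (tpow C X (S k)) with
  | 0 => tensm a (idm unit)
  | S j => tensm (idm X) (lastm a j)
  end.

Lemma runit_inv_nat (C : SymMonCat) (a a' : C) (g : hom C a a') :
  comp (tensm g (idm unit)) (runit_inv a) = comp (runit_inv a') g.
Proof.
  rewrite <- (comp_id_l C _ _ (comp (tensm g (idm unit)) (runit_inv a))).
  rewrite <- (runit_iso1 C a').
  rewrite <- comp_assoc. rewrite (comp_assoc C _ _ _ _ (runit C a')).
  rewrite runit_nat. rewrite <- comp_assoc. rewrite runit_iso2. rewrite comp_id_r.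
  reflexivity.
Qed.

Lemma shift_nat (C : SymMonCat) (X : C) (a : hom C X X) (k : nat) :
  comp (shift C X k) (tensm (idm (tpow C X k)) a) = comp (lastm a k) (shift C X k).
Proof.
  induction k as [|k IH]; cbn [shift lastm tpow] in *.
  - rewrite <- comp_assoc. rewrite lunit_nat. rewrite comp_assoc.
    rewrite comp_assoc. f_equal. symmetry. apply runit_inv_nat.
  - rewrite <- comp_assoc. rewrite <- (tensm_id C X (tpow C X k)).
    rewrite assoc_nat. rewrite comp_assoc. rewrite <- tensm_comp.
    rewrite IH. rewrite comp_id_l. rewrite comp_assoc.
    rewrite <- tensm_comp. rewrite comp_id_l. reflexivity.
Qed.

Lemma tensm_assoc_expr (C : SymMonCat) (a a' b b' c c' : C)
  (f : hom C a a') (g : hom C b b') (h : hom C c c') :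
  tensm (tensm f g) h =
  comp (assoc_inv C a' b' c') (comp (tensm f (tensm g h)) (assoc a b c)).
Proof.
  rewrite <- assoc_nat. rewrite comp_assoc. rewrite assoc_iso1. rewrite comp_id_l.
  reflexivity.
Qed.

Lemma conj_tens (C : SymMonCat) (A B Z Z' : C) (w : hom C A B) (w' : hom C B A)
  (ww : comp w w' = idm B) (g : hom C Z Z') :
  tensm (idm B) g = comp (tensm w (idm Z')) (comp (tensm (idm A) g) (tensm w' (idm Z))).
Proof.
  rewrite <- !tensm_comp. rewrite !comp_id_l, !comp_id_r. rewrite ww. reflexivity.
Qed.

Lemma cancel_I (C : SymMonCat) (I : C) (hI : invertible_object I) (Z Z' : C)
  (g h : hom C Z Z') : tensm (idm I) g = tensm (idm I) h -> g = h.
Proof.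
  intro E.
  destruct hI as [J [u [v [H1 H2]]]].
  assert (E2 : tensm (idm (tens J I)) g = tensm (idm (tens J I)) h).
  { rewrite <- !tensm_id. rewrite !tensm_assoc_expr. rewrite E. reflexivity. }
  set (w := comp u (braid J I)). set (w' := comp (braid I J) v).
  assert (ww : comp w w' = idm unit).
  { unfold w, w'. rewrite <- comp_assoc. rewrite (comp_assoc C _ _ _ _ (braid J I)).
    rewrite braid_sym. rewrite comp_id_l. exact H2. }
  assert (E3 : tensm (idm unit) g = tensm (idm unit) h).
  { rewrite (conj_tens C _ _ _ _ w w' ww g), (conj_tens C _ _ _ _ w w' ww h).
    rewrite E2. reflexivity. }
  rewrite <- (comp_id_r C _ _ g), <- (comp_id_r C _ _ h).
  rewrite <- (lunit_iso2 C Z). rewrite !comp_assoc. rewrite <- !lunit_nat.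
  rewrite E3. reflexivity.
Qed.

Lemma cancel_e (C : SymMonCat) (I X : C) (hI : invertible_object I)
  (e : hom C I X) (f : hom C X I) (hret : comp f e = idm I) (Z Z' : C)
  (g h : hom C Z Z') : tensm e g = tensm e h -> g = h.
Proof.
  intro E. apply (cancel_I C I hI).
  rewrite <- hret. rewrite <- (comp_id_l C _ _ g), <- (comp_id_l C _ _ h).
  rewrite !tensm_comp. rewrite E. reflexivity.
Qed.

Lemma last_id (C : SymMonCat) (I X : C) (hI : invertible_object I)
  (e : hom C I X) (f : hom C X I) (hret : comp f e = idm I) (k : nat) :
  lastm (comp e f) k = idm _ -> comp e f = idm X.
Proof.
  induction k as [|k IH]; cbn [lastm]; intro E.
  - rewrite <- (comp_id_r C _ _ (comp e f)). rewrite <- (runit_iso2 C X).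
    rewrite comp_assoc. rewrite <- runit_nat. rewrite E. rewrite comp_id_r.
    reflexivity.
  - apply IH. apply (cancel_e C I X hI e f hret).
    assert (H : comp (tensm (idm X) (lastm (comp e f) k)) (tensm e (idm _))
                = comp (idm _) (tensm e (idm (tpow C X (S k))))) by (rewrite E; reflexivity).
    rewrite <- tensm_comp in H. rewrite comp_id_l, comp_id_l, comp_id_r in H.
    rewrite H. reflexivity.
Qed.

Theorem proposition2p1 (C : SymMonCat) (I X : C)
    (hI : invertible_object I)
    (e : hom C I X) (f : hom C X I)
    (hret : comp f e = idm I)
    (hX : symmetric_object X) :
  comp e f = idm X /\ comp f e = idm I.
Proof.
  split; [|exact hret].
  destruct hX as [n [hn hc]].
  destruct n as [|[|k]]; try lia.
  set (p := comp e f).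
  assert (key : tensm p (idm (tpow C X (S k))) = lastm p (S k)).
  { transitivity (comp (cyclic_perm C X (S (S k))) (tensm p (idm (tpow C X (S k))))).
    { rewrite hc. rewrite comp_id_l. reflexivity. }
    simpl cyclic_perm. rewrite <- comp_assoc. rewrite braid_nat.
    rewrite comp_assoc. rewrite shift_nat. rewrite <- comp_assoc.
    change (comp (shift C X (S k)) (braid X (tpow C X (S k)))) with (cyclic_perm C X (S (S k))).
    rewrite hc. apply comp_id_r. }
  apply (last_id C I X hI e f hret k).
  apply (cancel_e C I X hI e f hret).
  assert (H : comp (tensm p (idm (tpow C X (S k)))) (tensm e (idm (tpow C X (S k))))
              = comp (lastm p (S k)) (tensm e (idm (tpow C X (S k))))) by (rewrite key; reflexivity).
  cbn [lastm] in H. rewrite <- tensm_comp in H.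
  rewrite comp_id_l in H.
  assert (pe : comp p e = e).
  { unfold p. rewrite <- comp_assoc. rewrite hret. apply comp_id_r. }
  rewrite pe in H.
  transitivity (comp (tensm (idm X) (lastm p k)) (tensm e (idm (tens X (tpow C X k))))).
  { rewrite <- tensm_comp, comp_id_l, comp_id_r. reflexivity. }
  exact (eq_sym H).
Qed.
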